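(* Let $(p,q,n,m)\in\mathbb{Z}_{\geq 0}^4$ and suppose that $T_{p',q',n',m'}$ is $G_\infty$-Noetherian for all $(p',q',n',m')\in\mathbb{Z}_{\ge0}^4$ such that $(p',q',n')$ is lexicographically smaller than $(p,q,n)$. Then for every $r\in\mathbb{Z}_{\geq 0}$, each of the following subsets of $T_{p,q,n,m}$ (with the subspace topology) is $G_\infty$-Noetherian: (i) $\{x=(x_{\mathrm{sym}},x_{\mathrm{alt}},x_{\mathrm{col}},x_{\mathrm{fin}})\in T_{p,q,n,m}:\ \mathrm{rk}(x_{\mathrm{sym}})\leq r\}$; (ii) $\{x\in T_{p,q,n,m}:\ \mathrm{rk}(x_{\mathrm{alt}})\leq r\}$; (iii) $\{x\in T_{p,q,n,m}:\ \mathrm{rk}(x_{\mathrm{col}})<n\}$.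
   Context: $\mathbb{C}^\infty$ is the space of all complex sequences indexed by $\mathbb{N}$ (column vectors), $\mathbb{C}^\infty_{\mathrm{fin}}$ its subspace of finitely supported sequences; $\mathrm{Sym}_\infty$, $\mathrm{Alt}_\infty$ are the spaces of symmetric, respectively skew-symmetric, complex $\mathbb{N}\times\mathbb{N}$ matrices, viewed as linear maps $\mathbb{C}^\infty_{\mathrm{fin}}\to\mathbb{C}^\infty$. $T_{p,q,n,m}=\mathrm{Sym}_\infty^{p}\times\mathrm{Alt}_\infty^{q}\times(\mathbb{C}^\infty)^n\times\mathbb{C}^m$, and a point is written $x=(x_{\mathrm{sym}},x_{\mathrm{alt}},x_{\mathrm{col}},x_{\mathrm{fin}})$ accordingly. It carries the Zariski topology whose coordinate ring is the polynomial ring in all coordinates (each polynomial involves finitely many coordinates). $G_\infty=\bigcup_k\mathrm{GL}_k(\mathbb{C})$ (embedded via $g\mapsto\mathrm{diag}(g,\mathrm{Id})$) acts by $g\cdot M=gMg^T$ on matrices, by left multiplication on vectors in $\mathbb{C}^\infty$, and trivially on $\mathbb{C}^m$. A space with a $G$-action is $G$-Noetherian if every strictly descending chain of $G$-stable closed subsets has finite length. Rank of a tuple: for vector spaces $V,W$ and $M=(M_1,\dots,M_s)\in\mathrm{Hom}(V,W)^s$, $\mathrm{rk}(M)$ is the infimum of $\mathrm{rk}(\sum_i\lambda_iM_i)\in\mathbb{Z}_{\ge0}\cup\{\infty\}$ over all nonzero $(\lambda_1,\dots,\lambda_s)\in\mathbb{C}^s$ (so $\mathrm{rk}(M)=\infty$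 if $s=0$). For $x_{\mathrm{col}}=(v_1,\dots,v_n)\in(\mathbb{C}^\infty)^n$, $\mathrm{rk}(x_{\mathrm{col}})$ denotes the dimension of the span of $v_1,\dots,v_n$. *)

(* Defs.v *)
From Stdlib Require Import Reals.
Open Scope R_scope.

Definition C : Type := (R * R)%type.
Definition C0 : C := (0, 0).
Definition C1 : C := (1, 0).
Definition Cadd (a b : C) : C := (fst a + fst b, snd a + snd b).
Definition Copp (a : C) : C := (- fst a, - snd a).
Definition Cmul (a b : C) : C :=
  (fst a * fst b - snd a * snd b, fst a * snd b + snd a * fst b).

Fixpoint Csum (r : nat) (f : nat -> C) : C :=
  match r with
  | O => C0
  | S r' => Cadd (Csum r' f) (f r')
  end.

(** * Points of T_{p,q,n,m}
   A point is stored as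
   - xsym k : the k-th N x N matrix of x_sym  (entry (i,j) = xsym k i j),
   - xalt k : the k-th N x N matrix of x_alt,
   - xcol k : the k-th vector of x_col (entry i = xcol k i),
   - xfin k : the k-th coordinate of x_fin,
   and [inT p q n m] cuts out exactly T_{p,q,n,m}: the first p (resp. q)
   matrices are symmetric (resp. skew-symmetric), and all unused slots are 0. *)
Record pt : Type := Pt {
  xsym : nat -> nat -> nat -> C;
  xalt : nat -> nat -> nat -> C;
  xcol : nat -> nat -> C;
  xfin : nat -> C }.

Definition inT (p q n m : nat) (x : pt) : Prop :=
  (forall k i j, (k < p)%nat -> xsym x k i j = xsym x k j i) /\
  (forall k i j, (p <= k)%nat -> xsym x k i j = C0) /\
  (forall k i j, (k < q)%nat -> xalt x k i j = Copp (xalt x k j i)) /\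
  (forall k i j, (q <= k)%nat -> xalt x k i j = C0) /\
  (forall k i, (n <= k)%nat -> xcol x k i = C0) /\
  (forall k, (m <= k)%nat -> xfin x k = C0).

Inductive coord : Type :=
  | VSym (k i j : nat)
  | VAlt (k i j : nat)
  | VCol (k i : nat)
  | VFin (k : nat).

Inductive poly : Type :=
  | PConst (c : C)
  | PVar (v : coord)
  | PAdd (f g : poly)
  | PMul (f g : poly).

Definition eval_coord (v : coord) (x : pt) : C :=
  match v with
  | VSym k i j => xsym x k i j
  | VAlt k i j => xalt x k i j
  | VCol k i => xcol x k i
  | VFin k => xfin x k
  end.

Fixpoint eval (f : poly) (x : pt) : C :=
  match f with
  | PConst c => c
  | PVar v => eval_coord v x
  | PAdd f g => Cadd (eval f x) (eval g x)
  | PMul f g => Cmul (eval f x) (eval g x)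
  end.

Definition closed_in (Y Z : pt -> Prop) : Prop :=
  exists S : poly -> Prop,
    forall x, Z x <-> (Y x /\ forall f, S f -> eval f x = C0).

(** * The group G_infinity = union of GL_k, g = diag(A, Id) *)
Definition invertible (k : nat) (A : nat -> nat -> C) : Prop :=
  exists B : nat -> nat -> C,
    forall i j, (i < k)%nat -> (j < k)%nat ->
      Csum k (fun l => Cmul (A i l) (B l j)) = (if Nat.eqb i j then C1 else C0) /\
      Csum k (fun l => Cmul (B i l) (A l j)) = (if Nat.eqb i j then C1 else C0).

Definition actvec (k : nat) (A : nat -> nat -> C) (v : nat -> C) : nat -> C :=
  fun i => if Nat.ltb i k then Csum k (fun a => Cmul (A i a) (v a)) else v i.

(** M |-> g M g^T *)
Definition actmat (k : nat) (A : nat -> nat -> C) (M : nat -> nat -> C)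
  : nat -> nat -> C :=
  fun i j => actvec k A (fun b => actvec k A (fun a => M a b) i) j.

Definition act (k : nat) (A : nat -> nat -> C) (x : pt) : pt :=
  {| xsym := fun c => actmat k A (xsym x c);
     xalt := fun c => actmat k A (xalt x c);
     xcol := fun c => actvec k A (xcol x c);
     xfin := xfin x |}.

Definition Gstable (Z : pt -> Prop) : Prop :=
  forall k A, invertible k A -> forall x, Z x -> Z (act k A x).

Definition GNoetherian (Y : pt -> Prop) : Prop :=
  ~ exists chain : nat -> pt -> Prop,
      (forall i, closed_in Y (chain i) /\ Gstable (chain i)) /\
      (forall i, (forall x, chain (S i) x -> chain i x) /\
                 exists x, chain i x /\ ~ chain (S i) x).

Definition span_dim_le (P : nat -> Prop) (v : nat -> nat -> C) (r : nat) : Prop :=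
  exists U : nat -> nat -> C,
    forall k, P k -> exists c : nat -> C,
      forall i, v k i = Csum r (fun l => Cmul (c l) (U l i)).

(** rank of a matrix M : C^inf_fin -> C^inf = dim of its image
    = dim of the span of its columns. *)
Definition mat_rank_le (M : nat -> nat -> C) (r : nat) : Prop :=
  span_dim_le (fun _ => True) (fun j i => M i j) r.

(** rk of an s-tuple of matrices (Ms 0, ..., Ms (s-1)) is <= r:
    the infimum over nonzero lambda of rk(sum lambda_k Ms k) is <= r,
    i.e. it is attained by some nonzero lambda (ranks are in N ∪ {oo}). *)
Definition tuple_rank_le (s : nat) (Ms : nat -> nat -> nat -> C) (r : nat) : Prop :=
  exists lam : nat -> C,
    (exists k, (k < s)%nat /\ lam k <> C0) /\
    mat_rank_le (fun i j => Csum s (fun k => Cmul (lam k) (Ms k i j))) r.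

Definition col_rank_lt (n : nat) (x : pt) : Prop :=
  exists r, (r < n)%nat /\ span_dim_le (fun k => (k < n)%nat) (xcol x) r.

Definition lex_lt (a b : nat * nat * nat) : Prop :=
  match a, b with
  | (p', q', n'), (p, q, n) =>
      (p' < p)%nat \/ (p' = p /\ q' < q)%nat \/ (p' = p /\ q' = q /\ n' < n)%nat
  end.

Definition Ysym (p q n m r : nat) (x : pt) : Prop :=
  inT p q n m x /\ tuple_rank_le p (xsym x) r.
Definition Yalt (p q n m r : nat) (x : pt) : Prop :=
  inT p q n m x /\ tuple_rank_le q (xalt x) r.
Definition Ycol (p q n m : nat) (x : pt) : Prop :=
  inT p q n m x /\ col_rank_lt n x.

(* Main.v *)
From Stdlib Require Import Reals Lra Lia Psatz Arith FunctionalExtensionality ClassicalEpsilon Ring.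
Require Import Defs.
Open Scope R_scope.

Definition Csub (a b : C) : C := Cadd a (Copp b).

Lemma C_ring : ring_theory C0 C1 Cadd Cmul Csub Copp (@eq C).
Proof.
  constructor; intros;
  repeat match goal with a : Defs.C |- _ => destruct a | a : prod R R |- _ => destruct a end;
  unfold Csub, Cadd, Cmul, Copp, C0, C1; simpl; f_equal; ring.
Qed.
Add Ring Cring : C_ring.


Definition Cinv (a : C) : C :=
  (fst a / (fst a * fst a + snd a * snd a), - snd a / (fst a * fst a + snd a * snd a)).

Lemma Cinv_l (a : C) : a <> C0 -> Cmul (Cinv a) a = C1.
Proof.
  destruct a as [x y]; intro H; unfold Cinv, Cmul, C1; simpl.
  assert (x * x + y * y <> 0).
  { intro E. apply H. unfold C0. assert (x = 0) by nra. assert (y = 0) by nra. subst; reflexivity. }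
  f_equal; field; auto.
Qed.

Lemma C1_neq_C0 : C1 <> C0.
Proof. unfold C1, C0; intro E; inversion E; lra. Qed.

Lemma Csum_ext (r : nat) (f g : nat -> C) :
  (forall l, (l < r)%nat -> f l = g l) -> Csum r f = Csum r g.
Proof.
  induction r; intros H; simpl; auto.
  rewrite IHr by (intros; apply H; lia). rewrite H by lia. reflexivity.
Qed.

Lemma Csum_add (r : nat) (f g : nat -> C) :
  Csum r (fun l => Cadd (f l) (g l)) = Cadd (Csum r f) (Csum r g).
Proof. induction r; simpl. unfold C0, Cadd; simpl; f_equal; ring. rewrite IHr; ring. Qed.

Lemma Csum_scal (r : nat) (c : C) (f : nat -> C) :
  Csum r (fun l => Cmul c (f l)) = Cmul c (Csum r f).
Proof. induction r; simpl. unfold C0, Cmul; simpl; f_equal; ring. rewrite IHr; ring. Qed.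

Lemma Csum_zero (r : nat) : Csum r (fun _ => C0) = C0.
Proof. induction r; simpl; auto. rewrite IHr; ring. Qed.

Lemma Csum_swap (r s : nat) (F : nat -> nat -> C) :
  Csum r (fun a => Csum s (fun b => F a b)) = Csum s (fun b => Csum r (fun a => F a b)).
Proof.
  induction r; simpl. symmetry; apply Csum_zero.
  rewrite IHr. rewrite <- Csum_add. reflexivity.
Qed.

Lemma Csum_split (r k0 : nat) (g : nat -> C) : (k0 < r)%nat ->
  Csum r g = Cadd (g k0) (Csum r (fun k => if Nat.eqb k k0 then C0 else g k)).
Proof.
  induction r; intros H; [lia|]. simpl.
  destruct (Nat.eq_dec k0 r) as [->|Hne].
  - rewrite Nat.eqb_refl.
    rewrite (Csum_ext r (fun k => if Nat.eqb k r then C0 else g k) g).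
    ring. intros l Hl. destruct (Nat.eqb_spec l r); [lia|auto].
  - rewrite IHr by lia. destruct (Nat.eqb_spec r k0); [lia|]. ring.
Qed.

Lemma Csum_pad (r d : nat) (g : nat -> C) :
  (forall l, (r <= l)%nat -> g l = C0) -> Csum (r + d) g = Csum r g.
Proof.
  intros H; induction d. rewrite Nat.add_0_r; auto.
  rewrite Nat.add_succ_r; simpl. rewrite IHd, H by lia. ring.
Qed.

Lemma actvec_ext k A (u v : nat -> C) i :
  (forall a, u a = v a) -> actvec k A u i = actvec k A v i.
Proof.
  intros H; unfold actvec; destruct (Nat.ltb i k); auto.
  apply Csum_ext; intros; rewrite H; auto.
Qed.

Lemma actvec_add k A (u v : nat -> C) i :
  actvec k A (fun a => Cadd (u a) (v a)) i = Cadd (actvec k A u i) (actvec k A v i).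
Proof.
  unfold actvec; destruct (Nat.ltb i k); auto.
  rewrite <- Csum_add. apply Csum_ext; intros; ring.
Qed.

Lemma actvec_scal k A (c : C) (u : nat -> C) i :
  actvec k A (fun a => Cmul c (u a)) i = Cmul c (actvec k A u i).
Proof.
  unfold actvec; destruct (Nat.ltb i k); auto.
  rewrite <- Csum_scal. apply Csum_ext; intros; ring.
Qed.

Lemma actvec_scal_r k A (c : C) (u : nat -> C) i :
  actvec k A (fun a => Cmul (u a) c) i = Cmul (actvec k A u i) c.
Proof.
  rewrite (actvec_ext k A _ (fun a => Cmul c (u a))) by (intros; ring).
  rewrite actvec_scal; ring.
Qed.

Lemma actvec_zero k A i : actvec k A (fun _ => C0) i = C0.
Proof.
  unfold actvec; destruct (Nat.ltb i k); auto.
  rewrite (Csum_ext _ _ (fun _ => C0)) by (intros; ring). apply Csum_zero.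
Qed.

Lemma actvec_opp k A (u : nat -> C) i :
  actvec k A (fun a => Copp (u a)) i = Copp (actvec k A u i).
Proof.
  rewrite (actvec_ext k A _ (fun a => Cmul (Copp C1) (u a))) by (intros; ring).
  rewrite actvec_scal; ring.
Qed.

Lemma actvec_csum k A r (F : nat -> nat -> C) i :
  actvec k A (fun a => Csum r (fun l => F l a)) i = Csum r (fun l => actvec k A (F l) i).
Proof.
  induction r; simpl. apply actvec_zero.
  rewrite actvec_add, IHr. reflexivity.
Qed.

Lemma actmat_ext k A (M N : nat -> nat -> C) i j :
  (forall a b, M a b = N a b) -> actmat k A M i j = actmat k A N i j.
Proof.
  intros H; unfold actmat. apply actvec_ext; intros b. apply actvec_ext; intros a. auto.
Qed.

Lemma actmat_add k A (M N : nat -> nat -> C) i j :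
  actmat k A (fun a b => Cadd (M a b) (N a b)) i j = Cadd (actmat k A M i j) (actmat k A N i j).
Proof.
  unfold actmat. rewrite <- actvec_add. apply actvec_ext; intros b. apply actvec_add.
Qed.

Lemma actmat_scal k A c (M : nat -> nat -> C) i j :
  actmat k A (fun a b => Cmul c (M a b)) i j = Cmul c (actmat k A M i j).
Proof.
  unfold actmat. rewrite <- actvec_scal. apply actvec_ext; intros b. apply actvec_scal.
Qed.

Lemma actmat_opp k A (M : nat -> nat -> C) i j :
  actmat k A (fun a b => Copp (M a b)) i j = Copp (actmat k A M i j).
Proof.
  unfold actmat. rewrite <- actvec_opp. apply actvec_ext; intros b. apply actvec_opp.
Qed.

Lemma actmat_zero k A i j : actmat k A (fun _ _ => C0) i j = C0.
Proof.
  unfold actmat. rewrite (actvec_ext k A _ (fun _ => C0)). apply actvec_zero.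
  intros; apply actvec_zero.
Qed.

Lemma actmat_csum k A r (F : nat -> nat -> nat -> C) i j :
  actmat k A (fun a b => Csum r (fun l => F l a b)) i j = Csum r (fun l => actmat k A (F l) i j).
Proof.
  unfold actmat. rewrite <- actvec_csum. apply actvec_ext; intros b. apply actvec_csum.
Qed.

Lemma actmat_bilin k A r (u w : nat -> nat -> C) i j :
  actmat k A (fun a b => Csum r (fun l => Cmul (u l a) (w l b))) i j =
  Csum r (fun l => Cmul (actvec k A (u l) i) (actvec k A (w l) j)).
Proof.
  unfold actmat.
  rewrite (actvec_ext k A _ (fun b => Csum r (fun l => Cmul (actvec k A (u l) i) (w l b)))).
  - rewrite actvec_csum. apply Csum_ext; intros. apply actvec_scal.
  - intros b. rewrite actvec_csum. apply Csum_ext; intros. apply actvec_scal_r.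
Qed.

Lemma actmat_T k A (M : nat -> nat -> C) i j :
  actmat k A M j i = actmat k A (fun a b => M b a) i j.
Proof.
  unfold actmat, actvec.
  destruct (Nat.ltb i k); destruct (Nat.ltb j k); auto.
  transitivity (Csum k (fun a => Csum k (fun b => Cmul (A i a) (Cmul (A j b) (M b a))))).
  { apply Csum_ext; intros; rewrite <- Csum_scal; reflexivity. }
  rewrite Csum_swap. apply Csum_ext; intros b _.
  rewrite <- Csum_scal. apply Csum_ext; intros a _. ring.
Qed.

Lemma inT_act p q n m k A x : inT p q n m x -> inT p q n m (act k A x).
Proof.
  intros (H1&H2&H3&H4&H5&H6); unfold inT, act; simpl; repeat split; intros.
  - rewrite actmat_T; apply actmat_ext; intros; apply H1; auto.
  - rewrite (actmat_ext _ _ _ (fun _ _ => C0)); [apply actmat_zero | intros; apply H2; auto].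
  - rewrite actmat_T, <- actmat_opp; apply actmat_ext; intros; apply H3; auto.
  - rewrite (actmat_ext _ _ _ (fun _ _ => C0)); [apply actmat_zero | intros; apply H4; auto].
  - rewrite (actvec_ext _ _ _ (fun _ => C0)); [apply actvec_zero | intros; apply H5; auto].
  - apply H6; auto.
Qed.

Fixpoint psum (r : nat) (F : nat -> poly) : poly :=
  match r with O => PConst C0 | S r' => PAdd (psum r' F) (F r') end.

Lemma eval_psum r F x : eval (psum r F) x = Csum r (fun l => eval (F l) x).
Proof. induction r; simpl; auto. rewrite IHr; auto. Qed.

Definition pneg (g : poly) : poly := PMul (PConst (Copp C1)) g.
Lemma eval_pneg g x : eval (pneg g) x = Copp (eval g x).
Proof. simpl. ring. Qed.

Fixpoint subst (s : coord -> poly) (g : poly) : poly :=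
  match g with
  | PConst c => PConst c
  | PVar v => s v
  | PAdd f h => PAdd (subst s f) (subst s h)
  | PMul f h => PMul (subst s f) (subst s h)
  end.

Lemma eval_subst s g y z :
  (forall v, eval (s v) y = eval_coord v z) -> eval (subst s g) y = eval g z.
Proof. intros H; induction g; simpl; auto; rewrite IHg1, IHg2; auto. Qed.

Lemma choice_nat {T : Type} (P : nat -> T -> Prop) :
  (forall k, exists c, P k c) -> exists g : nat -> T, forall k, P k (g k).
Proof.
  intros H. exists (fun k => proj1_sig (constructive_indefinite_description _ (H k))).
  intros k. exact (proj2_sig (constructive_indefinite_description _ (H k))).
Qed.

Lemma desc_mono (Ch : nat -> pt -> Prop) :
  (forall i x, Ch (S i) x -> Ch i x) -> forall d j x, Ch (d + j)%nat x -> Ch j x.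
Proof. intros H d; induction d; simpl; auto. Qed.

Lemma stabilize (Y : pt -> Prop) (Ch : nat -> pt -> Prop) :
  GNoetherian Y ->
  (forall i, closed_in Y (Ch i) /\ Gstable (Ch i)) ->
  (forall i x, Ch (S i) x -> Ch i x) ->
  exists N, forall i, (N <= i)%nat -> forall x, Ch i x -> Ch (S i) x.
Proof.
  intros HN Hc Hd.
  destruct (classic (exists N, forall i, (N <= i)%nat -> forall x, Ch i x -> Ch (S i) x)) as [E|E]; auto.
  exfalso.
  assert (H : forall N, exists i, (N < i)%nat /\ exists x, Ch N x /\ ~ Ch i x).
  { intros N. apply NNPP; intro H0. apply E. exists N. intros i Hi x Hx.
    apply NNPP; intro H1. apply H0. exists (S i). split; [lia|]. exists x. split; auto.
    replace i with ((i - N) + N)%nat in Hx by lia. apply (desc_mono Ch Hd) in Hx. auto. }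
  destruct (choice_nat _ H) as [nx Hnx].
  set (h := fix h s := match s with O => O | S s' => nx (h s') end).
  apply HN. exists (fun s => Ch (h s)). split.
  - intros; apply Hc.
  - intros s. simpl. destruct (Hnx (h s)) as [Hlt [x [Hx1 Hx2]]]. split.
    + intros y Hy. replace (nx (h s)) with ((nx (h s) - h s) + h s)%nat in Hy by lia.
      apply (desc_mono Ch Hd) in Hy; auto.
    + exists x; auto.
Qed.

Lemma bound_lemma (P : nat -> nat -> Prop) N :
  (forall j, (j < N)%nat -> exists n, forall i, (n <= i)%nat -> P j i) ->
  exists B, forall j, (j < N)%nat -> forall i, (B <= i)%nat -> P j i.
Proof.
  induction N; intros H. exists O; intros; lia.
  destruct IHN as [B HB]. intros; apply H; lia.
  destruct (H N) as [n Hn]; [lia|].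
  exists (Nat.max B n). intros j Hj i Hi.
  destruct (Nat.eq_dec j N) as [->|]. apply Hn; lia. apply HB; lia.
Qed.

Lemma transfer (N : nat) (Y : pt -> Prop) (Y' : nat -> pt -> Prop)
  (f : nat -> pt -> pt) (sg : nat -> coord -> poly) :
  (forall j, (j < N)%nat -> GNoetherian (Y' j)) ->
  (forall j, (j < N)%nat -> Gstable (Y' j)) ->
  (forall j y, (j < N)%nat -> Y' j y -> Y (f j y)) ->
  (forall j y v, (j < N)%nat -> Y' j y -> eval (sg j v) y = eval_coord v (f j y)) ->
  (forall j k A y, (j < N)%nat -> invertible k A -> Y' j y -> f j (act k A y) = act k A (f j y)) ->
  (forall x, Y x -> exists j y, (j < N)%nat /\ Y' j y /\ f j y = x) ->
  GNoetherian Y.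
Proof.
  intros HN HG HY Hsg Heq Hsur [Z [HZ HZs]].
  set (Ch := fun j i y => Y' j y /\ Z i (f j y)).
  assert (Hst : forall j, (j < N)%nat -> exists n, forall i, (n <= i)%nat ->
                 forall y, Ch j i y -> Ch j (S i) y).
  { intros j Hj. apply (stabilize (Y' j)); auto.
    - intros i. destruct (HZ i) as [[S0 HS0] HZG]. split.
      + exists (fun h => exists g, S0 g /\ h = subst (sg j) g).
        intros y. unfold Ch. split.
        * intros [Hy Hz]. split; auto. intros h [g [Hg ->]].
          rewrite (eval_subst _ _ y (f j y)) by (intros; apply Hsg; auto).
          apply HS0 in Hz. apply Hz; auto.
        * intros [Hy Hall]. split; auto. apply HS0. split; [apply HY; auto|].
          intros g Hg. rewrite <- (eval_subst (sg j) g y (f j y)) by (intros; apply Hsg; auto).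
          apply Hall. eauto.
      + intros k A HA y [Hy Hz]. split. apply (HG j Hj); auto.
        rewrite Heq; auto.
    - intros i y [Hy Hz]. split; auto. apply HZs; auto. }
  destruct (bound_lemma (fun j i => forall y, Ch j i y -> Ch j (S i) y) N Hst) as [B HB].
  destruct (HZs B) as [_ [x [Hx1 Hx2]]].
  assert (Yx : Y x). { destruct (HZ B) as [[S0 HS0] _]. apply HS0 in Hx1. tauto. }
  destruct (Hsur x Yx) as [j [y [Hj [Hy <-]]]].
  apply Hx2. assert (Ch j (S B) y) as [_ Hc]. { apply HB; auto. split; auto. } auto.
Qed.

Lemma closed_sub (Y W : pt -> Prop) (S0 : poly -> Prop) :
  GNoetherian Y -> (forall x, W x <-> Y x /\ forall g, S0 g -> eval g x = C0) ->
  GNoetherian W.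
Proof.
  intros HN HW [Z [HZ HZs]]. apply HN. exists Z. split; auto.
  intros i. destruct (HZ i) as [[S1 HS1] HG]. split; auto.
  exists (fun g => S0 g \/ S1 g). intros x. rewrite HS1, HW. split.
  - intros [[Hy H0] H1]. split; auto. intros g [|]; auto.
  - intros [Hy H]. split; auto.
Qed.

Lemma empty_noeth (Y : pt -> Prop) : (forall x, ~ Y x) -> GNoetherian Y.
Proof.
  intros H [Z [HZ HZs]]. destruct (HZs O) as [_ [x [Hx _]]].
  destruct (HZ O) as [[S0 HS0] _]. apply HS0 in Hx. apply (H x); tauto.
Qed.


Lemma pt_eq (x y : pt) : xsym x = xsym y -> xalt x = xalt y -> xcol x = xcol y -> xfin x = xfin y -> x = y.
Proof. destruct x, y; simpl; intros; subst; auto. Qed.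

Lemma divmod_lem k l n' : (l < n')%nat -> ((k * n' + l) / n' = k /\ (k * n' + l) mod n' = l)%nat.
Proof.
  intros H. assert (E : ((k * n' + l) / n' = k)%nat).
  { rewrite Nat.div_add_l by lia. rewrite Nat.div_small by lia. lia. }
  split; auto. pose proof (Nat.div_mod_eq (k * n' + l) n'). rewrite E in H0. lia.
Qed.

Definition fcol (n m N1 : nat) (y : pt) : pt :=
 {| xsym := xsym y; xalt := xalt y;
    xcol := fun k => if Nat.ltb k n
      then (fun i => Csum N1 (fun l => Cmul (xfin y (m + k * N1 + l)) (xcol y l i)))
      else (fun _ => C0);
    xfin := fun k => if Nat.ltb k m then xfin y k else C0 |}.

Definition sgcol (n m N1 : nat) (v : coord) : poly :=
  match v with
  | VCol k i => if Nat.ltb k n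
      then psum N1 (fun l => PMul (PVar (VFin (m + k * N1 + l))) (PVar (VCol l i)))
      else PConst C0
  | VFin k => if Nat.ltb k m then PVar (VFin k) else PConst C0
  | v => PVar v
  end.

Theorem col_noeth (p q n m : nat)
  (Hind : forall p' q' n' m' : nat,
      lex_lt (p', q', n') (p, q, n) -> GNoetherian (inT p' q' n' m')) :
  GNoetherian (Ycol p q n m).
Proof.
  destruct n as [|n'].
  { apply empty_noeth. intros x [_ [r [Hr _]]]. lia. }
  apply (transfer 1 _ (fun _ => inT p q n' (m + S n' * n')) (fun _ => fcol (S n') m n')
            (fun _ => sgcol (S n') m n')).
  - intros; apply Hind. simpl; lia.
  - intros j _ k A HA y Hy. apply inT_act; auto.
  - intros j y _ (H1&H2&H3&H4&H5&H6). split.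
    + unfold inT, fcol; simpl; repeat split; auto.
      * intros k i Hk. destruct (Nat.ltb_spec k (S n')); [lia|auto].
      * intros k Hk. destruct (Nat.ltb_spec k m); [lia|auto].
    + exists n'. split; [lia|]. exists (fun l i => xcol y l i).
      intros k Hk. exists (fun l => xfin y (m + k * n' + l)). intros i. simpl.
      destruct (Nat.ltb_spec k (S n')); [auto|lia].
  - intros j y v _ _. destruct v; simpl; auto.
    + destruct (Nat.ltb k (S n')); simpl; auto. rewrite eval_psum. reflexivity.
    + destruct (Nat.ltb k m); simpl; auto.
  - intros j k A y _ HA Hy. apply pt_eq; simpl; auto.
    extensionality c. destruct (Nat.ltb c (S n')); extensionality i.
    + rewrite actvec_csum. apply Csum_ext; intros. rewrite actvec_scal. reflexivity.
    + symmetry; apply actvec_zero.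
  - intros x [(H1&H2&H3&H4&H5&H6) [r [Hr [U HU]]]].
    assert (Hc : forall k, exists c : nat -> C, (k < S n')%nat ->
               forall i, xcol x k i = Csum r (fun l => Cmul (c l) (U l i))).
    { intros k. destruct (Nat.ltb_spec k (S n')).
      - destruct (HU k H) as [c Hc]. exists c; auto.
      - exists (fun _ => C0). intros; lia. }
    destruct (choice_nat _ Hc) as [cc Hcc].
    exists O, {| xsym := xsym x; xalt := xalt x;
       xcol := fun l => if Nat.ltb l r then U l else (fun _ => C0);
       xfin := fun s => if Nat.ltb s m then xfin x s else
                 if Nat.ltb s (m + S n' * n') then cc ((s - m) / n')%nat ((s - m) mod n')%nat else C0 |}.
    split; [lia|]. split.
    + unfold inT; simpl; repeat split; auto.
      * intros k i Hk. destruct (Nat.ltb_spec k r); [lia|auto].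
      * intros k Hk. destruct (Nat.ltb_spec k m); [lia|]. match goal with |- context [Nat.ltb ?a ?b] => destruct (Nat.ltb_spec a b) end; [lia|auto].
    + apply pt_eq; simpl; auto.
      * extensionality k. destruct (Nat.ltb_spec k (S n')); extensionality i.
        -- rewrite Hcc by auto.
           replace n' with (r + (n' - r))%nat at 1 by lia.
           rewrite Csum_pad.
           ++ apply Csum_ext; intros l Hl.
              destruct (Nat.ltb_spec l r); [|lia].
              destruct (Nat.ltb_spec (m + k * n' + l) m); [lia|].
              match goal with |- context [Nat.ltb ?a ?b] => destruct (Nat.ltb_spec a b) end; [|nia].
              replace (m + k * n' + l - m)%nat with (k * n' + l)%nat by lia.
              destruct (divmod_lem k l n') as [-> ->]; [lia|]. reflexivity.
           ++ intros l Hl. destruct (Nat.ltb_spec l r); [lia|]. ring.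
        -- symmetry; apply H5; lia.
      * extensionality k. destruct (Nat.ltb_spec k m); auto. symmetry; apply H6; lia.
Qed.


Definition Fmat (r p k0 : nat) (sw : nat -> nat) (U Cc : nat -> nat -> C) (lam : nat -> C)
  (Ms : nat -> nat -> nat -> C) (i j : nat) : C :=
  Csub (Csum r (fun l => Cmul (U l i) (Cc l j)))
       (Csum p (fun k' => if Nat.eqb k' k0 then C0 else Cmul (lam k') (Ms (sw k') i j))).

Lemma actmat_Fmat k A r p k0 sw U Cc lam Ms i j :
  actmat k A (Fmat r p k0 sw U Cc lam Ms) i j =
  Fmat r p k0 sw (fun l => actvec k A (U l)) (fun l => actvec k A (Cc l)) lam
     (fun c => actmat k A (Ms c)) i j.
Proof.
  unfold Fmat, Csub. rewrite actmat_add, actmat_opp, actmat_bilin, actmat_csum.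
  f_equal. f_equal. apply Csum_ext; intros l _.
  destruct (Nat.eqb l k0). apply actmat_zero. apply actmat_scal.
Qed.

Definition swp (P k0 k : nat) : nat := if Nat.eqb k P then k0 else k.

Definition fsym (P n m r k0 : nat) (y : pt) : pt :=
 {| xsym := fun k => if Nat.eqb k k0
       then Fmat r (S P) k0 (swp P k0) (fun l => xcol y (n + l)) (fun l => xcol y (n + r + l))
              (fun k => xfin y (m + k)) (xsym y)
       else xsym y (swp P k0 k);
    xalt := xalt y;
    xcol := fun k => if Nat.ltb k n then xcol y k else (fun _ => C0);
    xfin := fun k => if Nat.ltb k m then xfin y k else C0 |}.

Definition pUC (n r i j : nat) : poly :=
  psum r (fun l => PMul (PVar (VCol (n + l) i)) (PVar (VCol (n + r + l) j))).

Definition sgsym (P n m r k0 : nat) (v : coord) : poly :=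
  match v with
  | VSym k i j => if Nat.eqb k k0
      then PAdd (pUC n r i j)
             (pneg (psum (S P) (fun k' => if Nat.eqb k' k0 then PConst C0
                    else PMul (PVar (VFin (m + k'))) (PVar (VSym (swp P k0 k') i j)))))
      else PVar (VSym (swp P k0 k) i j)
  | VCol k i => if Nat.ltb k n then PVar (VCol k i) else PConst C0
  | VFin k => if Nat.ltb k m then PVar (VFin k) else PConst C0
  | v => PVar v
  end.

Definition UC (n r : nat) (y : pt) (i j : nat) : C :=
  Csum r (fun l => Cmul (xcol y (n + l) i) (xcol y (n + r + l) j)).

Definition Wsym (P q n m r : nat) (y : pt) : Prop :=
  inT P q (n + 2 * r) (m + S P) y /\ forall i j, UC n r y i j = UC n r y j i.

Lemma eval_pUC n r i j y : eval (pUC n r i j) y = UC n r y i j.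
Proof. unfold pUC, UC. rewrite eval_psum. reflexivity. Qed.

Lemma Csub_eq0 a b : Cadd a (Copp b) = C0 <-> a = b.
Proof.
  split; intros H. transitivity (Cadd (Cadd a (Copp b)) b). ring. rewrite H; ring.
  subst; ring.
Qed.

Lemma swp_lt P k0 k : (k0 < S P)%nat -> (k < S P)%nat -> k <> k0 -> (swp P k0 k < P)%nat.
Proof. intros. unfold swp. destruct (Nat.eqb_spec k P); lia. Qed.

Lemma UC_act n r k A y i j :
  UC n r (act k A y) i j = actmat k A (UC n r y) i j.
Proof. unfold UC. rewrite actmat_bilin. reflexivity. Qed.

Theorem sym_noeth (p q n m r : nat)
  (Hind : forall p' q' n' m' : nat,
      lex_lt (p', q', n') (p, q, n) -> GNoetherian (inT p' q' n' m')) :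
  GNoetherian (Ysym p q n m r).
Proof.
  destruct p as [|P].
  { apply empty_noeth. intros x [_ [lam [[k [Hk _]] _]]]. lia. }
  apply (transfer (S P) _ (fun _ => Wsym P q n m r) (fun k0 => fsym P n m r k0)
            (fun k0 => sgsym P n m r k0)).
  -
    intros j _. apply (closed_sub (inT P q (n + 2 * r) (m + S P)) _
      (fun g => exists i j, g = PAdd (pUC n r i j) (pneg (pUC n r j i)))).
    + apply Hind. simpl; lia.
    + intros x. unfold Wsym. split.
      * intros [H1 H2]. split; auto. intros g [i [j' ->]]. simpl.
        rewrite !eval_pUC. apply Csub_eq0. rewrite H2. ring.
      * intros [H1 H2]. split; auto. intros i j'. apply Csub_eq0.
        rewrite <- (eval_pUC n r i j'), <- (eval_pUC n r j' i).
        rewrite <- (H2 _ (ltac:(exists i, j'; reflexivity))). simpl. ring.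
  -
    intros j _ k A HA y [H1 H2]. split. apply inT_act; auto.
    intros i j'. rewrite !UC_act. rewrite actmat_T. apply actmat_ext; intros; auto.
  -
    intros k0 y Hk0 [(H1&H2&H3&H4&H5&H6) HW]. split.
    + unfold inT, fsym; simpl; repeat split; auto.
      * intros k i j Hk. destruct (Nat.eqb_spec k k0).
        -- unfold Fmat. fold (UC n r y i j). fold (UC n r y j i). rewrite HW. f_equal.
           apply Csum_ext; intros l Hl. destruct (Nat.eqb_spec l k0); auto.
           rewrite H1; auto. apply swp_lt; auto.
        -- apply H1. apply swp_lt; auto.
      * intros k i j Hk. destruct (Nat.eqb_spec k k0); [lia|]. apply H2.
        unfold swp. destruct (Nat.eqb_spec k P); lia.
      * intros k i Hk. destruct (Nat.ltb_spec k n); [lia|auto].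
      * intros k Hk. destruct (Nat.ltb_spec k m); [lia|auto].
    + exists (fun k => if Nat.eqb k k0 then C1 else xfin y (m + k)). split.
      { exists k0. split; auto. rewrite Nat.eqb_refl. apply C1_neq_C0. }
      exists (fun l i => xcol y (n + l) i). intros j _.
      exists (fun l => xcol y (n + r + l) j). intros i.
      rewrite (Csum_split (S P) k0) by auto. simpl xsym. rewrite !Nat.eqb_refl.
      rewrite (Csum_ext (S P) _ (fun k' => if Nat.eqb k' k0 then C0
          else Cmul (xfin y (m + k')) (xsym y (swp P k0 k') i j))).
      2:{ intros l _. destruct (Nat.eqb l k0); auto. }
      unfold Fmat, Csub.
      rewrite (Csum_ext r (fun l => Cmul (xcol y (n + r + l) j) (xcol y (n + l) i))
                 (fun l => Cmul (xcol y (n + l) i) (xcol y (n + r + l) j))) by (intros; ring).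
      ring.
  -
    intros k0 y v _ _. destruct v; unfold sgsym; cbn [eval eval_coord fsym xsym xalt xcol xfin pneg]; auto.
    + destruct (Nat.eqb k k0); cbn [eval eval_coord]; auto.
      rewrite eval_pneg, eval_pUC, eval_psum. unfold Fmat, Csub. fold (UC n r y i j).
      rewrite (Csum_ext (S P) _ (fun k' => if Nat.eqb k' k0 then C0
          else Cmul (xfin y (m + k')) (xsym y (swp P k0 k') i j))).
      ring. intros l _. destruct (Nat.eqb l k0); auto.
    + destruct (Nat.ltb k n); simpl; auto.
    + destruct (Nat.ltb k m); simpl; auto.
  -
    intros k0 k A y _ HA Hy. apply pt_eq; simpl; auto.
    + extensionality c. destruct (Nat.eqb c k0); auto.
      extensionality i. extensionality j. rewrite actmat_Fmat. reflexivity.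
    + extensionality c. destruct (Nat.ltb c n); extensionality i; auto.
      symmetry; apply actvec_zero.
  -
    intros x [(H1&H2&H3&H4&H5&H6) [lam [[k0 [Hk0 Hl0]] [U HU]]]].
    set (Ml := fun i j => Csum (S P) (fun k => Cmul (lam k) (xsym x k i j))).
    assert (Hc : forall j, exists c : nat -> C,
               forall i, Ml i j = Csum r (fun l => Cmul (c l) (U l i))).
    { intros j. destruct (HU j I) as [c Hc]. exists c; auto. }
    destruct (choice_nat _ Hc) as [cc Hcc].
    set (mu := Cinv (lam k0)).
    set (y := {| xsym := fun s => if Nat.ltb s P then (if Nat.eqb s k0 then xsym x P else xsym x s)
                                  else (fun _ _ => C0);
       xalt := xalt x;
       xcol := fun s => if Nat.ltb s n then xcol x s else if Nat.ltb s (n + r) then U (s - n)%nat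
                 else if Nat.ltb s (n + 2 * r) then (fun j => Cmul mu (cc j (s - n - r)%nat))
                 else (fun _ => C0);
       xfin := fun s => if Nat.ltb s m then xfin x s else
                 if Nat.ltb s (m + S P) then Cmul mu (lam (s - m)%nat) else C0 |}).
    assert (HUC : forall i j, UC n r y i j = Cmul mu (Ml i j)).
    { intros i j. unfold UC. rewrite Hcc, <- Csum_scal. apply Csum_ext; intros l Hl.
      simpl. destruct (Nat.ltb_spec (n + l) n); [lia|].
      destruct (Nat.ltb_spec (n + l) (n + r)); [|lia].
      destruct (Nat.ltb_spec (n + r + l) n); [lia|].
      destruct (Nat.ltb_spec (n + r + l) (n + r)); [lia|].
      match goal with |- context [Nat.ltb ?a ?b] => destruct (Nat.ltb_spec a b) end; [|lia].
      replace (n + l - n)%nat with l by lia. replace (n + r + l - n - r)%nat with l by lia. ring. }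
    assert (Hsw : forall k', (k' < S P)%nat -> k' <> k0 -> xsym y (swp P k0 k') = xsym x k').
    { intros k' Hk' Hne. unfold swp. simpl. destruct (Nat.eqb_spec k' P).
      - subst. destruct (Nat.ltb_spec k0 P); [|lia]. rewrite Nat.eqb_refl. auto.
      - destruct (Nat.ltb_spec k' P); [|lia]. destruct (Nat.eqb_spec k' k0); [lia|auto]. }
    assert (Eys : xsym y = fun s => if Nat.ltb s P then (if Nat.eqb s k0 then xsym x P else xsym x s)
                                  else (fun _ _ => C0)) by reflexivity.
    assert (Eya : xalt y = xalt x) by reflexivity.
    assert (Eyc : xcol y = fun s => if Nat.ltb s n then xcol x s else if Nat.ltb s (n + r) then U (s - n)%nat
                 else if Nat.ltb s (n + 2 * r) then (fun j => Cmul mu (cc j (s - n - r)%nat))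
                 else (fun _ => C0)) by reflexivity.
    assert (Eyf : xfin y = fun s => if Nat.ltb s m then xfin x s else
                 if Nat.ltb s (m + S P) then Cmul mu (lam (s - m)%nat) else C0) by reflexivity.
    clearbody y.
    exists k0, y. split; [auto|]. split.
    + split.
      * unfold inT; rewrite Eys, Eya, Eyc, Eyf; cbv beta; repeat split.
        -- intros k i j Hk. destruct (Nat.ltb_spec k P); [|lia].
           destruct (Nat.eqb k k0); apply H1; lia.
        -- intros k i j Hk. destruct (Nat.ltb_spec k P); [lia|auto].
        -- intros; apply H3; auto.
        -- intros; apply H4; auto.
        -- intros k i Hk. destruct (Nat.ltb_spec k n); [lia|].
           destruct (Nat.ltb_spec k (n + r)); [lia|].
           match goal with |- context [Nat.ltb ?a ?b] => destruct (Nat.ltb_spec a b) end; [lia|auto].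
        -- intros k Hk. destruct (Nat.ltb_spec k m); [lia|].
           match goal with |- context [Nat.ltb ?a ?b] => destruct (Nat.ltb_spec a b) end; [lia|auto].
      * intros i j. rewrite !HUC. f_equal. unfold Ml. apply Csum_ext; intros k Hk.
        rewrite H1; auto.
    + apply pt_eq; cbn [fsym xsym xalt xcol xfin]; auto.
      * extensionality k. destruct (Nat.eqb_spec k k0).
        -- subst k. extensionality i. extensionality j.
           unfold Fmat. change (Csum r ?F) with (UC n r y i j). rewrite HUC.
           rewrite (Csum_ext (S P) _ (fun k' => Cmul mu
               (if Nat.eqb k' k0 then C0 else Cmul (lam k') (xsym x k' i j)))).
           2:{ intros l Hl. destruct (Nat.eqb_spec l k0). ring.
               rewrite Hsw by auto. rewrite Eyf.
               destruct (Nat.ltb_spec (m + l) m); [lia|].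
               match goal with |- context [Nat.ltb ?a ?b] => destruct (Nat.ltb_spec a b) end; [|lia].
               replace (m + l - m)%nat with l by lia. ring. }
           rewrite Csum_scal. unfold Ml. rewrite (Csum_split (S P) k0) by auto.
           unfold Csub. transitivity (Cmul (Cmul mu (lam k0)) (xsym x k0 i j)). ring.
           unfold mu. rewrite Cinv_l by auto. ring.
        -- destruct (Nat.ltb_spec k (S P)). apply Hsw; auto.
           unfold swp. rewrite Eys. destruct (Nat.eqb_spec k P); [lia|].
           destruct (Nat.ltb_spec k P); [lia|].
           extensionality i; extensionality j. symmetry; apply H2; lia.
      * extensionality k. rewrite Eyc. destruct (Nat.ltb_spec k n); auto.
        extensionality i. symmetry; apply H5; lia.
      * extensionality k. rewrite Eyf. destruct (Nat.ltb_spec k m); auto.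
        symmetry; apply H6; lia.
Qed.


Definition falt (P n m r k0 : nat) (y : pt) : pt :=
 {| xsym := xsym y;
    xalt := fun k => if Nat.eqb k k0
       then Fmat r (S P) k0 (swp P k0) (fun l => xcol y (n + l)) (fun l => xcol y (n + r + l))
              (fun k => xfin y (m + k)) (xalt y)
       else xalt y (swp P k0 k);
    xcol := fun k => if Nat.ltb k n then xcol y k else (fun _ => C0);
    xfin := fun k => if Nat.ltb k m then xfin y k else C0 |}.

Definition sgalt (P n m r k0 : nat) (v : coord) : poly :=
  match v with
  | VAlt k i j => if Nat.eqb k k0
      then PAdd (pUC n r i j)
             (pneg (psum (S P) (fun k' => if Nat.eqb k' k0 then PConst C0
                    else PMul (PVar (VFin (m + k'))) (PVar (VAlt (swp P k0 k') i j)))))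
      else PVar (VAlt (swp P k0 k) i j)
  | VCol k i => if Nat.ltb k n then PVar (VCol k i) else PConst C0
  | VFin k => if Nat.ltb k m then PVar (VFin k) else PConst C0
  | v => PVar v
  end.

Definition Walt (p P n m r : nat) (y : pt) : Prop :=
  inT p P (n + 2 * r) (m + S P) y /\ forall i j, UC n r y i j = Copp (UC n r y j i).

Lemma Cadd_eq0 a b : Cadd a b = C0 <-> a = Copp b.
Proof.
  split; intros H. transitivity (Cadd (Cadd a b) (Copp b)). ring. rewrite H; ring.
  subst; ring.
Qed.

Theorem alt_noeth (p q n m r : nat)
  (Hind : forall p' q' n' m' : nat,
      lex_lt (p', q', n') (p, q, n) -> GNoetherian (inT p' q' n' m')) :
  GNoetherian (Yalt p q n m r).
Proof.
  destruct q as [|P].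
  { apply empty_noeth. intros x [_ [lam [[k [Hk _]] _]]]. lia. }
  apply (transfer (S P) _ (fun _ => Walt p P n m r) (fun k0 => falt P n m r k0)
            (fun k0 => sgalt P n m r k0)).
  -
    intros j _. apply (closed_sub (inT p P (n + 2 * r) (m + S P)) _
      (fun g => exists i j, g = PAdd (pUC n r i j) (pUC n r j i))).
    + apply Hind. simpl; lia.
    + intros x. unfold Walt. split.
      * intros [H1 H2]. split; auto. intros g [i [j' ->]]. simpl.
        rewrite !eval_pUC. apply Cadd_eq0. rewrite H2. ring.
      * intros [H1 H2]. split; auto. intros i j'. apply Cadd_eq0.
        rewrite <- (eval_pUC n r i j'), <- (eval_pUC n r j' i).
        rewrite <- (H2 _ (ltac:(exists i, j'; reflexivity))). simpl. ring.
  -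
    intros j _ k A HA y [H1 H2]. split. apply inT_act; auto.
    intros i j'. rewrite !UC_act. rewrite (actmat_T k A (UC n r y) j' i), <- actmat_opp.
    apply actmat_ext; intros; auto.
  -
    intros k0 y Hk0 [(H3&H4&H1&H2&H5&H6) HW]. split.
    + unfold inT, falt; simpl; repeat split; auto.
      * intros k i j Hk. destruct (Nat.eqb_spec k k0).
        -- unfold Fmat, Csub. fold (UC n r y i j). fold (UC n r y j i). rewrite HW.
           rewrite (Csum_ext (S P) _ (fun k' => Cmul (Copp C1) (if Nat.eqb k' k0 then C0 else
                  Cmul (xfin y (m + k')) (xalt y (swp P k0 k') j i)))).
           rewrite Csum_scal. ring.
           intros l Hl. destruct (Nat.eqb_spec l k0). ring.
           rewrite H1. ring. apply swp_lt; auto.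
        -- apply H1. apply swp_lt; auto.
      * intros k i j Hk. destruct (Nat.eqb_spec k k0); [lia|]. apply H2.
        unfold swp. destruct (Nat.eqb_spec k P); lia.
      * intros k i Hk. destruct (Nat.ltb_spec k n); [lia|auto].
      * intros k Hk. destruct (Nat.ltb_spec k m); [lia|auto].
    + exists (fun k => if Nat.eqb k k0 then C1 else xfin y (m + k)). split.
      { exists k0. split; auto. rewrite Nat.eqb_refl. apply C1_neq_C0. }
      exists (fun l i => xcol y (n + l) i). intros j _.
      exists (fun l => xcol y (n + r + l) j). intros i.
      rewrite (Csum_split (S P) k0) by auto. simpl xalt. rewrite !Nat.eqb_refl.
      rewrite (Csum_ext (S P) _ (fun k' => if Nat.eqb k' k0 then C0
          else Cmul (xfin y (m + k')) (xalt y (swp P k0 k') i j))).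
      2:{ intros l _. destruct (Nat.eqb l k0); auto. }
      unfold Fmat, Csub.
      rewrite (Csum_ext r (fun l => Cmul (xcol y (n + r + l) j) (xcol y (n + l) i))
                 (fun l => Cmul (xcol y (n + l) i) (xcol y (n + r + l) j))) by (intros; ring).
      ring.
  -
    intros k0 y v _ _. destruct v; unfold sgalt; cbn [eval eval_coord falt xalt xsym xcol xfin pneg]; auto.
    + destruct (Nat.eqb k k0); cbn [eval eval_coord]; auto.
      rewrite eval_pneg, eval_pUC, eval_psum. unfold Fmat, Csub. fold (UC n r y i j).
      rewrite (Csum_ext (S P) _ (fun k' => if Nat.eqb k' k0 then C0
          else Cmul (xfin y (m + k')) (xalt y (swp P k0 k') i j))).
      ring. intros l _. destruct (Nat.eqb l k0); auto.
    + destruct (Nat.ltb k n); simpl; auto.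
    + destruct (Nat.ltb k m); simpl; auto.
  -
    intros k0 k A y _ HA Hy. apply pt_eq; simpl; auto.
    + extensionality c. destruct (Nat.eqb c k0); auto.
      extensionality i. extensionality j. rewrite actmat_Fmat. reflexivity.
    + extensionality c. destruct (Nat.ltb c n); extensionality i; auto.
      symmetry; apply actvec_zero.
  -
    intros x [(H3&H4&H1&H2&H5&H6) [lam [[k0 [Hk0 Hl0]] [U HU]]]].
    set (Ml := fun i j => Csum (S P) (fun k => Cmul (lam k) (xalt x k i j))).
    assert (Hc : forall j, exists c : nat -> C,
               forall i, Ml i j = Csum r (fun l => Cmul (c l) (U l i))).
    { intros j. destruct (HU j I) as [c Hc]. exists c; auto. }
    destruct (choice_nat _ Hc) as [cc Hcc].
    set (mu := Cinv (lam k0)).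
    set (y := {| xalt := fun s => if Nat.ltb s P then (if Nat.eqb s k0 then xalt x P else xalt x s)
                                  else (fun _ _ => C0);
       xsym := xsym x;
       xcol := fun s => if Nat.ltb s n then xcol x s else if Nat.ltb s (n + r) then U (s - n)%nat
                 else if Nat.ltb s (n + 2 * r) then (fun j => Cmul mu (cc j (s - n - r)%nat))
                 else (fun _ => C0);
       xfin := fun s => if Nat.ltb s m then xfin x s else
                 if Nat.ltb s (m + S P) then Cmul mu (lam (s - m)%nat) else C0 |}).
    assert (HUC : forall i j, UC n r y i j = Cmul mu (Ml i j)).
    { intros i j. unfold UC. rewrite Hcc, <- Csum_scal. apply Csum_ext; intros l Hl.
      simpl. destruct (Nat.ltb_spec (n + l) n); [lia|].
      destruct (Nat.ltb_spec (n + l) (n + r)); [|lia].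
      destruct (Nat.ltb_spec (n + r + l) n); [lia|].
      destruct (Nat.ltb_spec (n + r + l) (n + r)); [lia|].
      match goal with |- context [Nat.ltb ?a ?b] => destruct (Nat.ltb_spec a b) end; [|lia].
      replace (n + l - n)%nat with l by lia. replace (n + r + l - n - r)%nat with l by lia. ring. }
    assert (Hsw : forall k', (k' < S P)%nat -> k' <> k0 -> xalt y (swp P k0 k') = xalt x k').
    { intros k' Hk' Hne. unfold swp. simpl. destruct (Nat.eqb_spec k' P).
      - subst. destruct (Nat.ltb_spec k0 P); [|lia]. rewrite Nat.eqb_refl. auto.
      - destruct (Nat.ltb_spec k' P); [|lia]. destruct (Nat.eqb_spec k' k0); [lia|auto]. }
    assert (Eys : xalt y = fun s => if Nat.ltb s P then (if Nat.eqb s k0 then xalt x P else xalt x s)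
                                  else (fun _ _ => C0)) by reflexivity.
    assert (Eya : xsym y = xsym x) by reflexivity.
    assert (Eyc : xcol y = fun s => if Nat.ltb s n then xcol x s else if Nat.ltb s (n + r) then U (s - n)%nat
                 else if Nat.ltb s (n + 2 * r) then (fun j => Cmul mu (cc j (s - n - r)%nat))
                 else (fun _ => C0)) by reflexivity.
    assert (Eyf : xfin y = fun s => if Nat.ltb s m then xfin x s else
                 if Nat.ltb s (m + S P) then Cmul mu (lam (s - m)%nat) else C0) by reflexivity.
    clearbody y.
    exists k0, y. split; [auto|]. split.
    + split.
      * unfold inT; rewrite Eys, Eya, Eyc, Eyf; cbv beta; repeat split.
        -- intros; apply H3; auto.
        -- intros; apply H4; auto.
        -- intros k i j Hk. destruct (Nat.ltb_spec k P); [|lia].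
           destruct (Nat.eqb k k0); apply H1; lia.
        -- intros k i j Hk. destruct (Nat.ltb_spec k P); [lia|]. ring.
        -- intros k i Hk. destruct (Nat.ltb_spec k n); [lia|].
           destruct (Nat.ltb_spec k (n + r)); [lia|].
           match goal with |- context [Nat.ltb ?a ?b] => destruct (Nat.ltb_spec a b) end; [lia|auto].
        -- intros k Hk. destruct (Nat.ltb_spec k m); [lia|].
           match goal with |- context [Nat.ltb ?a ?b] => destruct (Nat.ltb_spec a b) end; [lia|auto].
      * intros i j. rewrite !HUC. unfold Ml.
        rewrite (Csum_ext (S P) _ (fun k => Cmul (Copp C1) (Cmul (lam k) (xalt x k j i)))).
        rewrite Csum_scal. ring. intros k Hk. rewrite H1; auto. ring.
    + apply pt_eq; cbn [falt xalt xsym xcol xfin]; auto.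
      * extensionality k. destruct (Nat.eqb_spec k k0).
        -- subst k. extensionality i. extensionality j.
           unfold Fmat. change (Csum r ?F) with (UC n r y i j). rewrite HUC.
           rewrite (Csum_ext (S P) _ (fun k' => Cmul mu
               (if Nat.eqb k' k0 then C0 else Cmul (lam k') (xalt x k' i j)))).
           2:{ intros l Hl. destruct (Nat.eqb_spec l k0). ring.
               rewrite Hsw by auto. rewrite Eyf.
               destruct (Nat.ltb_spec (m + l) m); [lia|].
               match goal with |- context [Nat.ltb ?a ?b] => destruct (Nat.ltb_spec a b) end; [|lia].
               replace (m + l - m)%nat with l by lia. ring. }
           rewrite Csum_scal. unfold Ml. rewrite (Csum_split (S P) k0) by auto.
           unfold Csub. transitivity (Cmul (Cmul mu (lam k0)) (xalt x k0 i j)). ring.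
           unfold mu. rewrite Cinv_l by auto. ring.
        -- destruct (Nat.ltb_spec k (S P)). apply Hsw; auto.
           unfold swp. rewrite Eys. destruct (Nat.eqb_spec k P); [lia|].
           destruct (Nat.ltb_spec k P); [lia|].
           extensionality i; extensionality j. symmetry; apply H2; lia.
      * extensionality k. rewrite Eyc. destruct (Nat.ltb_spec k n); auto.
        extensionality i. symmetry; apply H5; lia.
      * extensionality k. rewrite Eyf. destruct (Nat.ltb_spec k m); auto.
        symmetry; apply H6; lia.
Qed.


Theorem lemma3p2 (p q n m : nat)
  (Hind : forall p' q' n' m' : nat,
      lex_lt (p', q', n') (p, q, n) -> GNoetherian (inT p' q' n' m')) :
  forall r : nat,
    GNoetherian (Ysym p q n m r) /\
    GNoetherian (Yalt p q n m r) /\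
    GNoetherian (Ycol p q n m).
Proof.
  intros r. split; [|split].
  - apply sym_noeth; auto.
  - apply alt_noeth; auto.
  - apply col_noeth; auto.
Qed.
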